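(* Every deterministic max-finding algorithm with error $k$ requires $\Omega(n^{1+1/(2^k-1)})$ comparisons on $n$ elements (in the worst case).
   Context: Model of imprecise comparisons: there are $n$ elements, each with a fixed unknown real value; we identify an element with its value. Asked to compare $x_i$ and $x_j$, the comparator answers either ''$x_i \ge x_j$'' or ''$x_j \ge x_i$''. If $|x_i-x_j|>1$ the answer is correct; if $|x_i-x_j|\le 1$ the answer is arbitrary (possibly adversarial and adaptive). A max-finding algorithm has error $k$ if for every input and every consistent comparator behaviour its output $x$ satisfies $x \ge x^*-k$, where $x^*$ is the maximum value of an input element. *)

(* Defs.v *)
From mathcomp Require Import all_boot.
From Stdlib Require Import Reals.

Set Implicit Arguments.
Unset Strict Implicit.

(* A deterministic (adaptive) comparison algorithm on n elements is a binary
   decision tree: [Query i j A B] compares x_i and x_j and continues with A if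
   the comparator answers "x_i >= x_j", with B if it answers "x_j >= x_i";
   [Leaf o] outputs element o. *)
Inductive alg (n : nat) : Type :=
| Leaf of 'I_n
| Query of 'I_n & 'I_n & alg n & alg n.

(* [run x A m o]: on input values x, some consistent (possibly adversarial,
   adaptive) comparator behaviour makes A perform exactly m comparisons and
   output o. *)
Inductive run (n : nat) (x : 'I_n -> R) : alg n -> nat -> 'I_n -> Prop :=
| run_leaf (o : 'I_n) : run x (Leaf o) 0 o
| run_ge (i j : 'I_n) (A B : alg n) (m : nat) (o : 'I_n) :
    (Rabs (x i - x j) <= 1 \/ x j <= x i)%R ->
    run x A m o -> run x (Query i j A B) m.+1 o
| run_le (i j : 'I_n) (A B : alg n) (m : nat) (o : 'I_n) :
    (Rabs (x i - x j) <= 1 \/ x i <= x j)%R ->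
    run x B m o -> run x (Query i j A B) m.+1 o.

Definition has_error (n : nat) (A : alg n) (k : R) : Prop :=
  forall (x : 'I_n -> R) (m : nat) (o : 'I_n), run x A m o ->
    forall i : 'I_n, (x i - k <= x o)%R.

(* Main.v *)
Require Import Defs.
From mathcomp Require Import all_boot zify.
From Stdlib Require Import Reals Lra.
Set Implicit Arguments.
Unset Strict Implicit.

Lemma card_bigcup_le (T I : finType) (A : {pred I}) (B : I -> {set T}) :
  (#|\bigcup_(v in A) B v| <= \sum_(v in A) #|B v|)%N.
Proof.
elim/big_rec2: _ => [|i X y _ H]; first by rewrite cards0.
apply: leq_trans (leq_card_setU _ _).1 _; by rewrite leq_add2l.
Qed.

Lemma cardsU1_le (T : finType) (a : T) (A : {set T}) : (#|a |: A| <= #|A|.+1)%N.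
Proof. rewrite cardsU1; case: (a \notin A) => //. Qed.

Section Comb.
Variable n : nat.
Notation I := ('I_n).

Definition W (L : seq (I * I)) (v : I) : nat := count (fun e => e.1 == v) L.

Definition Inv (L : seq (I * I)) : Prop :=
  forall v t, (#|[set u | ((v, u) \in L) && (W L u < t)]| <= minn t (W L v))%N.

Lemma W_rcons L i j v : W (rcons L (i, j)) v = (W L v + (i == v))%N.
Proof. by rewrite /W -cats1 count_cat /= addn0. Qed.

Lemma Inv_nil : Inv [::].
Proof. move=> v t; rewrite (_ : [set u | _] = set0) ?cards0 //; apply/setP => u; by rewrite !inE. Qed.

Lemma Inv_rcons L i j : Inv L -> (W L i <= W L j)%N -> Inv (rcons L (i, j)).
Proof.
move=> HI Hij v t.
have Wge u : (W L u <= W (rcons L (i, j)) u)%N by rewrite W_rcons leq_addr.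
case: (eqVneq v i) => [->|Hvi].
- case: (ltnP (W (rcons L (i, j)) j) t) => Hj.
  + apply: leq_trans (_ : #|j |: [set u | ((i, u) \in L) && (W L u < t)]| <= _)%N.
      apply: subset_leq_card; apply/subsetP => u; rewrite !inE mem_rcons in_cons.
      case/andP => /orP [/eqP [->] //|Hu] Hw; first by rewrite eqxx.
      rewrite Hu /=; apply/orP; right; exact: leq_ltn_trans (Wge u) Hw.
    apply: leq_trans (cardsU1_le _ _) _.
    have := HI i t; move: Hj; rewrite !W_rcons eqxx addn1; move: (i == j) => b; case: b; rewrite ?addn1 ?addn0 => Hj' Hc; move: Hc; set c := #|_|; move: Hij Hj'; clear; lia.
  + apply: leq_trans (_ : #|[set u | ((i, u) \in L) && (W L u < t)]| <= _)%N.
      apply: subset_leq_card; apply/subsetP => u; rewrite !inE mem_rcons in_cons.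
      case/andP => /orP [/eqP [->] Hw|Hu Hw]; first by rewrite ltnNge Hj in Hw.
      rewrite Hu /=; exact: leq_ltn_trans (Wge u) Hw.
    have := HI i t; rewrite W_rcons eqxx addn1; set c := #|_|; clear; lia.
- apply: leq_trans (_ : #|[set u | ((v, u) \in L) && (W L u < t)]| <= _)%N.
    apply: subset_leq_card; apply/subsetP => u; rewrite !inE mem_rcons in_cons.
    case/andP => /orP [/eqP [Hv _]|Hu Hw]; first by rewrite Hv eqxx in Hvi.
    rewrite Hu /=; exact: leq_ltn_trans (Wge u) Hw.
  rewrite W_rcons eq_sym (negbTE Hvi) addn0. exact: HI.
Qed.

Lemma sumW L : (\sum_(u : I) W L u)%N = size L.
Proof.
elim: L => [|e L IH]; first by rewrite big1.
rewrite /W /=. under eq_bigr => u _ do rewrite -/(W L u).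
rewrite big_split /= IH (bigD1 e.1) //= eqxx big1 ?addn0 // => u Hu.
by rewrite eq_sym (negbTE Hu).
Qed.

Lemma card_bigW L t : (t * #|[set u | t <= W L u]| <= size L)%N.
Proof.
rewrite -sumW mulnC -sum_nat_const.
apply: leq_trans (_ : \sum_(u in [set u | t <= W L u]) W L u <= _)%N.
  by apply: leq_sum => u; rewrite inE.
rewrite [X in (_ <= X)%N](bigID (fun u => u \in [set u | t <= W L u])) /=.
exact: leq_addr.
Qed.

Variable L : seq (I * I).
Variable o : I.

Fixpoint S (r : nat) : {set I} :=
  if r is r'.+1 then S r' :|: [set u | [exists v, (v \in S r') && ((v, u) \in L)]]
  else [set o].

Lemma S_mono r r' : (r <= r')%N -> S r \subset S r'.
Proof.
elim: r' => [|r' IH]; first by rewrite leqn0 => /eqP ->.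
rewrite leq_eqVlt => /orP [/eqP -> //| Hr].
apply: subset_trans (IH Hr) _; exact: subsetUl.
Qed.

Lemma o_in_S r : o \in S r.
Proof. apply: (subsetP (S_mono (leq0n r))); by rewrite inE. Qed.

Lemma S_small r : (#|S r| <= (size L).+1)%N.
Proof.
have H : S r \subset o |: [set u | u \in map snd L].
  elim: r => [|r IH]; first by rewrite sub1set !inE eqxx.
  rewrite /= subUset IH /=; apply/subsetP => u; rewrite !inE.
  case/existsP => v /andP [_ Hv]; apply/orP; right.
  by apply/mapP; exists (v, u).
apply: leq_trans (subset_leq_card H) _.
apply: leq_trans (cardsU1_le _ _) _.
by rewrite cardsE ltnS -(size_map snd) card_size.
Qed.

Lemma S_step r t : Inv L -> (0 < t)%N ->
  (#|S r.+1| <= #|S r| + #|S r| * t + #|[set u | t <= W L u]|)%N.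
Proof.
move=> HI Ht.
set B := fun v => [set u | ((v, u) \in L) && (W L u < t)].
have Hsub : S r.+1 \subset (S r :|: \bigcup_(v in S r) B v) :|: [set u | t <= W L u].
  rewrite /= subUset; apply/andP; split.
    by apply: subset_trans (subsetUl _ _) (subsetUl _ _).
  apply/subsetP => u; rewrite !inE; case/existsP => v /andP [Hv Hvu].
  case: (ltnP (W L u) t) => Hw; last by rewrite orbT.
  apply/orP; left; apply/orP; right; apply/bigcupP; exists v => //.
  by rewrite inE Hvu Hw.
apply: leq_trans (subset_leq_card Hsub) _.
apply: leq_trans (leq_card_setU _ _).1 _.
rewrite leq_add2r; apply: leq_trans (leq_card_setU _ _).1 _.
rewrite leq_add2l.
apply: leq_trans (card_bigcup_le _ _) _.
rewrite -sum_nat_const; apply: leq_sum => v _.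
apply: leq_trans (HI v t) _; exact: geq_minl.
Qed.

End Comb.

Section Play.
Variable n : nat.
Notation I := ('I_n).

Fixpoint play (A : alg n) (L : seq (I * I)) : seq (I * I) * I :=
  match A with
  | Leaf o => (L, o)
  | Query i j A1 A2 =>
      if (W L i <= W L j)%N then play A1 (rcons L (i, j))
      else play A2 (rcons L (j, i))
  end.

Lemma play_ext A L : exists s, (play A L).1 = L ++ s.
Proof.
elim: A L => [o|i j A1 IH1 A2 IH2] L /=; first by exists [::]; rewrite cats0.
case: ifP => _.
  by have [s ->] := IH1 (rcons L (i, j)); exists ((i, j) :: s); rewrite -cats1 -catA.
by have [s ->] := IH2 (rcons L (j, i)); exists ((j, i) :: s); rewrite -cats1 -catA.
Qed.

Lemma play_Inv A L : Inv L -> Inv (play A L).1.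
Proof.
elim: A L => [o|i j A1 IH1 A2 IH2] L HL //=.
case: ifP => H.
  by apply: IH1; apply: Inv_rcons.
apply: IH2; apply: Inv_rcons => //; move/negbT: H; rewrite -ltnNge; exact: ltnW.
Qed.

Lemma play_run (x : I -> R) A L :
  (forall e, e \in (play A L).1 -> (x e.2 <= x e.1 + 1)%R) ->
  run x A (size (play A L).1 - size L) (play A L).2.
Proof.
elim: A L => [o|i j A1 IH1 A2 IH2] L /=.
  move=> _; rewrite subnn; exact: run_leaf.
case: ifP => _ He.
- have [s Hs] := play_ext A1 (rcons L (i, j)).
  have Hin : (i, j) \in (play A1 (rcons L (i, j))).1.
    by rewrite Hs mem_cat mem_rcons in_cons eqxx.
  have Hsz : (size (play A1 (rcons L (i, j))).1 - size L = (size (play A1 (rcons L (i, j))).1 - size (rcons L (i, j))).+1)%N.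
    rewrite Hs size_cat size_rcons; lia.
  rewrite Hsz; apply: run_ge; last exact: IH1.
  have := He _ Hin; rewrite /=.
  destruct (Rle_dec (x j) (x i)) as [h|h]; [by right|left].
  unfold Rabs; destruct (Rcase_abs (x i - x j)); lra.
- have [s Hs] := play_ext A2 (rcons L (j, i)).
  have Hin : (j, i) \in (play A2 (rcons L (j, i))).1.
    by rewrite Hs mem_cat mem_rcons in_cons eqxx.
  have Hsz : (size (play A2 (rcons L (j, i))).1 - size L = (size (play A2 (rcons L (j, i))).1 - size (rcons L (j, i))).+1)%N.
    rewrite Hs size_cat size_rcons; lia.
  rewrite Hsz; apply: run_le; last exact: IH2.
  have := He _ Hin; rewrite /=.
  destruct (Rle_dec (x i) (x j)) as [h|h]; [by right|left].
  unfold Rabs; destruct (Rcase_abs (x i - x j)); lra.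
Qed.

End Play.

Section Dep.
Variable n : nat.
Notation I := ('I_n).
Variable L : seq (I * I).
Variable o : I.
Variable k : nat.

Definition dep (v : I) : nat := (\sum_(r < k.+1) (v \notin S L o r))%N.

Lemma dep_o : dep o = 0%N.
Proof. by rewrite /dep big1 // => r _; rewrite o_in_S. Qed.

Lemma dep_edge a b : (b, a) \in L -> (dep a <= dep b + 1)%N.
Proof.
move=> Hba; rewrite /dep big_ord_recl big_ord_recr /=.
have H2 : (\sum_(r < k) (a \notin S L o (bump 0 r)) <= \sum_(r < k) (b \notin S L o r))%N.
  apply: leq_sum => r _.
  case Hb: (b \in S L o r); last exact: leq_b1.
  have Ha : a \in S L o r.+1.
    rewrite /= !inE; apply/orP; right; apply/existsP; exists b; by rewrite Hb Hba.
  by rewrite /bump /= ?add0n ?add1n Ha.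
apply: leq_trans (leq_add (leq_b1 _) H2) _.
rewrite addnC leq_add2r; exact: leq_addr.
Qed.

Lemma dep_small i : (dep i <= k)%N -> i \in S L o k.
Proof.
apply: contraTT => Hi; rewrite -ltnNge /dep.
rewrite (eq_bigr (fun _ => 1%N)); first by rewrite sum1_card card_ord.
move=> r _; suff -> : i \notin S L o r by [].
apply: contra Hi; apply: (subsetP (S_mono _ _ _)); by rewrite -ltnS ltn_ord.
Qed.

End Dep.

Lemma step_sq n (L : seq ('I_n * 'I_n)) o r : Inv L -> (1 <= size L)%N ->
  (#|S L o r.+1| * #|S L o r.+1| <= 36 * size L * #|S L o r|)%N.
Proof.
move=> HI Hq.
set q := size L; set s := #|S L o r|; set s' := #|S L o r.+1|.
have Hs1 : (1 <= s)%N by rewrite /s card_gt0; apply/set0Pn; exists o; exact: o_in_S.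
have Hsq : (s <= q.+1)%N by exact: S_small.
have Hex : exists t, (0 < t)%N && (q <= s * t * t)%N.
  exists q; rewrite Hq /=; nia.
case: (ex_minnP Hex) => t /andP [Ht0 Hqt] Hmin.
have Hb := card_bigW L t.
have Hst := @S_step _ L o r t HI Ht0.
rewrite -/q -/s -/s' in Hb Hst.
move: Hb Hst; set b := #|_| => Hb Hst.
case: (eqVneq t 1) => [Ht1|Ht1].
  rewrite Ht1 in Hqt Hb Hst.
  have H3 : (s' <= 3 * s)%N by lia.
  have H4 : (s' * s' <= 3 * s * (3 * s))%N by apply: leq_mul.
  apply: leq_trans H4 _. nia.
have Ht2 : (2 <= t)%N by lia.
have Hlt : (s * t.-1 * t.-1 < q)%N.
  rewrite ltnNge; apply/negP => H.
  have := Hmin t.-1; rewrite H andbT.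
  have -> : (0 < t.-1)%N by lia.
  move=> /(_ isT); lia.
have Hbst : (b <= s * t)%N.
  have : (t * b <= t * (s * t))%N by nia.
  by rewrite leq_pmul2l.
have H3 : (s' <= 3 * (s * t))%N by nia.
have H5 : (s * t <= 2 * (s * t.-1))%N by nia.
have H6 : (s' <= 6 * (s * t.-1))%N by lia.
have H7 : (s' * s' <= 6 * (s * t.-1) * (6 * (s * t.-1)))%N by apply: leq_mul.
apply: leq_trans H7 _.
have : (s * (s * t.-1 * t.-1) <= s * q)%N by rewrite leq_mul2l; apply/orP; right; exact: ltnW.
nia.
Qed.

Lemma exp_le' (a b : R) : (a <= b)%R -> (exp a <= exp b)%R.
Proof. move=> H; case: (Rle_lt_or_eq_dec _ _ H) => [h|->]; [left; exact: exp_increasing | lra]. Qed.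

Lemma ln_le' (a b : R) : (0 < a)%R -> (a <= b)%R -> (ln a <= ln b)%R.
Proof. move=> Ha H; case: (Rle_lt_or_eq_dec _ _ H) => [h|->]; [left; exact: ln_increasing | lra]. Qed.

Lemma pow_bound n (L : seq ('I_n * 'I_n)) o : Inv L -> (1 <= size L)%N ->
  forall r, (INR #|S L o r| ^ (Nat.pow 2 r) <= (36 * INR (size L)) ^ (Nat.pow 2 r - 1))%R.
Proof.
move=> HI Hq.
have HqR : (1 <= INR (size L))%R by apply: (le_INR 1); apply/leP.
elim=> [|r IH].
  rewrite /= cards1 /=; lra.
have Hsq := step_sq o r HI Hq.
have HsqR : (INR #|S L o r.+1| * INR #|S L o r.+1| <= 36 * INR (size L) * INR #|S L o r|)%R.
  have H := le_INR _ _ (elimT leP Hsq).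
  rewrite -!multE !mult_INR in H.
  have -> : (36 = INR 36)%R by simpl; lra.
  exact: H.
set P := Nat.pow 2 r.
have HP : (1 <= P)%N by have := @Nat.pow_nonzero 2 r; rewrite /P; lia.
have -> : Nat.pow 2 r.+1 = (2 * P)%coq_nat by [].
have -> : (((2 * P)%coq_nat - 1)%N = (P + (P - 1)%N)%coq_nat) by move: HP; lia.
rewrite pow_mult pow_add.
set a' := INR #|S L o r.+1|; set a := INR #|S L o r|; set D := (36 * INR (size L))%R.
have Ha0 : (0 <= a)%R by apply: pos_INR.
have Ha'0 : (0 <= a')%R by apply: pos_INR.
apply: Rle_trans (_ : ((D * a) ^ P <= _)%R).
  apply: pow_incr; split; first by rewrite /= Rmult_1_r; nra.
  by rewrite /= Rmult_1_r.
rewrite Rpow_mult_distr; apply: Rmult_le_compat_l; first by apply: pow_le; rewrite /D; lra.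
exact: IH.
Qed.

Theorem mainTheorem16 :
  forall k : nat, (0 < k)%N ->
  exists c : R, (0 < c)%R /\
  exists N : nat, forall n : nat, (N <= n)%N ->
  forall A : alg n, has_error A (INR k) ->
  exists (x : 'I_n -> R) (m : nat) (o : 'I_n),
    run x A m o /\
    (c * Rpower (INR n) (1 + 1 / (2 ^ k - 1)) <= INR m)%R.
Proof.
move=> k Hk; exists (1/36)%R; split; first lra.
exists 2%N => n Hn A HA.
set L := (play A [::]).1; set o := (play A [::]).2.
set x := fun v => INR (dep L o k v).
have Hrun : run x A (size L) o.
  have := @play_run n x A [::]; rewrite subn0; apply.
  move=> [b a] /= Hin; rewrite /x -S_INR; apply: le_INR; apply/leP.
  have := dep_edge o k Hin; by rewrite addn1.
exists x, (size L), o; split => //.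
have Hall : forall i, i \in S L o k.
  move=> i; apply: dep_small.
  have := HA x _ _ Hrun i; rewrite /x dep_o /= => H.
  apply/leP; apply: INR_le; lra.
have HnS : #|S L o k| = n.
  have -> : S L o k = setT by apply/setP => i; rewrite Hall inE.
  by rewrite cardsT card_ord.
have HI : Inv L by apply: play_Inv; exact: Inv_nil.
have Hq : (1 <= size L)%N.
  have := S_small L o k; rewrite HnS; lia.
have Hb := pow_bound o HI Hq k.
rewrite HnS in Hb.
set P := Nat.pow 2 k in Hb.
have HP : (2 <= P)%N.
  have : (Nat.pow 2 1 <= Nat.pow 2 k)%coq_nat by apply: Nat.pow_le_mono_r; lia.
  rewrite /P /=; lia.
have HnR : (2 <= INR n)%R by apply: (le_INR 2); apply/leP.
have HqR : (1 <= INR (size L))%R by apply: (le_INR 1); apply/leP.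
have H2k : (2 ^ k = INR P)%R by rewrite /P pow_INR.
have HPm : (INR (P - 1) = INR P - 1)%R.
  rewrite -minusE minus_INR; first by [].
  apply/leP; lia.
have HP2 : (2 <= INR P)%R by apply: (le_INR 2); apply/leP.
set D := (36 * INR (size L))%R in Hb.
have HD : (1 <= D)%R by rewrite /D; lra.
have Hn0 : (0 < INR n)%R by lra.
have Hln := ln_le' (pow_lt (INR n) P Hn0) Hb.
rewrite !ln_pow in Hln; [|lra|lra].
rewrite HPm in Hln.
have Hexp : ((1 + 1 / (2 ^ k - 1)) * ln (INR n) <= ln D)%R.
  rewrite H2k.
  have Hlnn : (0 <= ln (INR n))%R by rewrite -ln_1; apply: ln_le'; lra.
  have -> : ((1 + 1 / (INR P - 1)) * ln (INR n) = INR P * ln (INR n) / (INR P - 1))%R by field; lra.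
  apply: (Rmult_le_reg_r (INR P - 1)); first lra.
  have -> : (INR P * ln (INR n) / (INR P - 1) * (INR P - 1) = INR P * ln (INR n))%R by field; lra.
  lra.
rewrite /Rpower.
apply: Rle_trans (_ : (1/36 * D <= _)%R); last by rewrite /D; lra.
apply: Rmult_le_compat_l; first lra.
rewrite -[X in (_ <= X)%R](exp_ln D); last lra.
exact: exp_le'.
Qed.
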